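(* Let $\alpha>0$, $N\ge1$, $f:\mathbb{R}\to(0,\infty)$ with $\sqrt f$ Lipschitz, $f\in C^4(\mathbb{R})$ and $(\sqrt f)^{(k)}$ bounded for $1\le k\le4$, and let $\mu$ be a centered probability measure on $\mathbb{R}$ with finite fourth moment. For $g\in C^2_b(\mathbb{R})$ let $A^Ng(x)=-\alpha xg'(x)+Nf(x)\int_{\mathbb{R}}[g(x+u/\sqrt N)-g(x)]d\mu(u)$. Then there is a constant $C_N>0$ (possibly depending on $N$, but not on $M$ or $g$) such that for all $g\in C^2_b(\mathbb{R})$ and all $M>0$, $$\sup_{x\in[-M,M]}|(A^Ng)'(x)|\le C_N\|g\|_{2,\infty}(1+M^2).$$
   Context: $\|g\|_{2,\infty}=\|g\|_\infty+\|g'\|_\infty+\|g''\|_\infty$. *)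

(* Defs.v *)
From HB Require Import structures.
From mathcomp Require Import all_boot all_order all_algebra.
From mathcomp Require Import all_classical all_reals all_analysis.
Set Implicit Arguments. Unset Strict Implicit. Unset Printing Implicit Defensive.
Import Order.TTheory GRing.Theory Num.Theory.
Import numFieldNormedType.Exports.
Local Open Scope classical_set_scope.
Local Open Scope ring_scope.

Definition dern (R : realType) (k : nat) (h : R -> R) : R -> R := derive1n k h.

Definition Ck (R : realType) (k : nat) (h : R -> R) : Prop :=
  (forall j x, (j < k)%N -> derivable (dern j h) x 1) /\ continuous (dern k h).

Definition bounded_fun_R (R : realType) (h : R -> R) : Prop :=
  exists K : R, forall x, `|h x| <= K.

Definition C2b (R : realType) (g : R -> R) : Prop :=
  Ck 2 g /\ forall j, (j <= 2)%N -> bounded_fun_R (dern j g).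

Definition supnorm (R : realType) (h : R -> R) : R :=
  sup [set `|h x| | x in [set: R]].

Definition norm2inf (R : realType) (g : R -> R) : R :=
  supnorm g + supnorm (dern 1 g) + supnorm (dern 2 g).

Definition lipschitz_R (R : realType) (h : R -> R) : Prop :=
  exists L : R, forall x y, `|h x - h y| <= L * `|x - y|.

Definition AN (R : realType) (alpha : R) (N : nat) (f : R -> R)
  (mu : probability R R) (g : R -> R) (x : R) : R :=
  - alpha * x * dern 1 g x
  + N%:R * f x * (\int[mu]_(u in [set: R]) (g (x + u / Num.sqrt (N%:R)) - g x)).

(* Main.v *)
Require Import Defs.
From HB Require Import structures.
From mathcomp Require Import all_boot all_order all_algebra.
From mathcomp Require Import all_classical all_reals all_analysis.
From mathcomp Require Import ring lra measurable_realfun.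
Import Order.TTheory GRing.Theory Num.Theory.
Import numFieldNormedType.Exports.
Local Open Scope classical_set_scope.
Local Open Scope ring_scope.
Section H.
Variable R : realType.

Lemma der_cont (h : R -> R) x : derivable h x 1 -> {for x, continuous h}.
Proof. by move=> /derivable1_diffP /differentiable_continuous. Qed.

Lemma mvt_bound (h dh : R -> R) (a b K : R) :
  (forall y : R, is_derive y 1 h (dh y)) ->
  (forall c, Num.min a b <= c <= Num.max a b -> `|dh c| <= K) ->
  `|h b - h a| <= K * `|b - a|.
Proof.
move=> hd hK.
have cont : continuous h.
  by move=> y; apply: der_cont; have [] := hd y.
wlog ab : a b hK / a <= b.
  move=> W; case/orP: (le_total a b) => ab; first by apply: W.
  rewrite distrC (distrC b); apply: W => // c.
  by rewrite minC maxC; apply: hK.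
have [c cab ->] := MVT_segment ab (fun y _ => hd y) (continuous_subspaceT cont).
rewrite normrM; apply: ler_wpM2r => //; apply: hK.
move: cab; rewrite in_itv /= => /andP[ac cb].
by rewrite (min_l ab) (max_r ab) ac cb.
Qed.


Lemma taylor2 (g : R -> R) (K2 y h : R) :
  (forall z : R, derivable g z 1) -> (forall z, derivable (derive1 g) z 1) ->
  (forall z, `|derive1 (derive1 g) z| <= K2) ->
  `|g (y + h) - g y - h * derive1 g y| <= K2 * h ^+ 2.
Proof.
move=> dg dg' K2b.
have isd (f : R -> R) (z : R) : derivable f z 1 -> is_derive z 1 f (derive1 f z).
  by move=> df; rewrite derive1E; exact: derivableP.
pose phi : R -> R := g - (derive1 g y) \*: id.
have dphi (z : R) : is_derive z 1 phi (derive1 g z - derive1 g y *: 1).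
  apply: is_deriveB; first exact: isd.
have B : forall c : R, Num.min y (y + h) <= c <= Num.max y (y + h) ->
    `|derive1 g c - (derive1 g y)%:A| <= K2 * `|h|.
  move=> c /andP[c1 c2]; rewrite /GRing.scale /= mulr1.
  have := @mvt_bound (derive1 g) (derive1 (derive1 g)) y c K2
    (fun z => isd _ z (dg' z)) (fun z _ => K2b z).
  move=> H; apply: le_trans H _.
  have K0 : 0 <= K2 by apply: le_trans (K2b 0).
  apply: ler_wpM2l => //.
  case/orP: (le_total 0 h) => h0.
  - move: c1 c2; rewrite (min_l _) ?lerDl // (max_r _) ?lerDl //.
    move=> c1 c2; rewrite ger0_norm ?subr_ge0 // ger0_norm //; lra.
  - move: c1 c2; rewrite (min_r _) ?gerDl // (max_l _) ?gerDl //.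
    move=> c1 c2; rewrite ler0_norm ?subr_le0 // ler0_norm //; lra.
have E (t : R) : phi t = g t - derive1 g y * t by [].
have := @mvt_bound phi _ y (y + h) (K2 * `|h|) dphi B.
rewrite !E (_ : y + h - y = h); last by ring.
rewrite -mulrA -expr2 real_normK ?num_real //.
congr (`|_| <= _); ring.
Qed.


Section I.
Variable mu : probability R R.

Lemma cb_int (F : R -> R) : continuous F -> (exists K, forall u, `|F u| <= K) ->
  mu.-integrable setT (EFin \o F).
Proof.
move=> cF [K hK]; apply: measurable_bounded_integrable => //.
- by apply: (le_lt_trans (probability_le1 mu measurableT)); rewrite ltry.
- exact: continuous_measurable_fun.
- rewrite /bounded_near; near=> M => x _ /=; apply: le_trans (hK x) _.
  near: M; apply: nbhs_pinfty_ge; exact: num_real.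
Unshelve. all: by end_near.
Qed.

Lemma int_bound (F : R -> R) (K : R) : mu.-integrable setT (EFin \o F) ->
  (forall u, `|F u| <= K) -> `|\int[mu]_(u in setT) F u| <= K.
Proof.
move=> iF hK.
apply: le_trans (le_normr_Rintegral _ iF) _ => //.
have icst : mu.-integrable setT (EFin \o (fun _ : R => K)).
  by apply: cb_int; [exact: cst_continuous | exists `|K| => _; exact: lexx].
apply: le_trans (le_Rintegral _ _ icst _) _ => //.
- exact: integrable_norm.
rewrite Rintegral_cst // (_ : fine _ = 1) ?mulr1 //.
exact: (congr1 fine (probability_setT mu)).
Qed.


Lemma cont_shift (G : R -> R) (a s : R) : continuous G ->
  continuous (fun u : R => G (a + u / s)).
Proof.
move=> cG u; apply: continuous_comp; last exact: cG.
apply: continuousD; first exact: cst_continuous.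
by apply: continuousM; [exact: (fun z => cvg_id) | exact: cst_continuous].
Qed.

Lemma contB (F G : R -> R) : continuous F -> continuous G ->
  continuous (fun u => F u - G u).
Proof. by move=> cF cG u; apply: continuousB; [exact: cF|exact: cG]. Qed.

Lemma contM (F G : R -> R) : continuous F -> continuous G ->
  continuous (fun u => F u * G u).
Proof. by move=> cF cG u; apply: continuousM; [exact: cF|exact: cG]. Qed.

Lemma param_deriv (g : R -> R) (s x K0 K1 K2 : R) :
  (forall z : R, derivable g z 1) -> (forall z : R, derivable (derive1 g) z 1) ->
  (forall z, `|g z| <= K0) -> (forall z, `|derive1 g z| <= K1) ->
  (forall z, `|derive1 (derive1 g) z| <= K2) ->
  is_derive x 1 (fun y => \int[mu]_(u in setT) (g (y + u / s) - g y))
    (\int[mu]_(u in setT) (derive1 g (x + u / s) - derive1 g x)).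
Proof.
move=> dg dg' hK0 hK1 hK2.
have cg : continuous g by move=> z; apply: der_cont.
have cg' : continuous (derive1 g) by move=> z; apply: der_cont.
have K2p : 0 <= K2 by apply: le_trans (hK2 0).
have intB (G : R -> R) KG a : continuous G -> (forall z, `|G z| <= KG) ->
    mu.-integrable setT (EFin \o (fun u => G (a + u / s) - G a)).
  move=> cG hG; apply: cb_int.
    by apply: contB; [exact: cont_shift | exact: cst_continuous].
  exists (KG + KG) => u; apply: le_trans (ler_normB _ _) _.
  exact: lerD.
set P := fun y => _.
set D := Rintegral _ _ _.
have est (h : R) : `|P (h + x) - P x - h * D| <= K2 * h ^+ 2 + K2 * h ^+ 2.
  rewrite /P /D -RintegralB //; [|exact: (intB _ K0)|exact: (intB _ K0)].
  rewrite -RintegralZl //; last exact: (intB _ K1).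
  rewrite -RintegralB //; last first.
  - apply: cb_int.
      apply: contM; first exact: cst_continuous.
      by apply: contB; [exact: cont_shift | exact: cst_continuous].
    exists (`|h| * (K1 + K1)) => u; rewrite normrM ler_wpM2l //.
    by apply: le_trans (ler_normB _ _) _; exact: lerD.
  - apply: cb_int.
      apply: contB; apply: contB; try exact: cont_shift;
      exact: cst_continuous.
    exists (K0 + K0 + (K0 + K0)) => u; apply: le_trans (ler_normB _ _) _.
    by apply: lerD; apply: le_trans (ler_normB _ _) _; exact: lerD.
  apply: int_bound.
    apply: cb_int.
      apply: contB.
        apply: contB; apply: contB; try exact: cont_shift;
        exact: cst_continuous.
      apply: contM; first exact: cst_continuous.
      by apply: contB; [exact: cont_shift | exact: cst_continuous].
    exists (K0 + K0 + (K0 + K0) + `|h| * (K1 + K1)) => u.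
    apply: le_trans (ler_normB _ _) _; apply: lerD.
      by apply: le_trans (ler_normB _ _) _; apply: lerD;
      apply: le_trans (ler_normB _ _) _; exact: lerD.
    rewrite normrM ler_wpM2l //.
    by apply: le_trans (ler_normB _ _) _; exact: lerD.
  move=> u.
  have -> : g (h + x + u / s) - g (h + x) - (g (x + u / s) - g x) -
      h * (derive1 g (x + u / s) - derive1 g x) =
      (g ((x + u / s) + h) - g (x + u / s) - h * derive1 g (x + u / s)) -
      (g (x + h) - g x - h * derive1 g x).
    by rewrite (addrC h x) (addrAC x h); ring.
  by apply: le_trans (ler_normB _ _) _; apply: lerD; exact: taylor2.
have lim : (fun h : R => h^-1 *: (P (h *: 1 + x) - P x)) @ 0^' --> D.
  apply/cvgrPdist_le => e e0.
  have k0 : 0 < 2 * K2 + 1 by lra.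
  near=> h.
  have h0 : h != 0 by near: h; exact: nbhs_dnbhs_neq.
  have hs : `|h| < e / (2 * K2 + 1).
    by near: h; apply: dnbhs0_lt; exact: divr_gt0.
  have -> : h *: (1 : R) = h by rewrite /GRing.scale /= mulr1.
  have -> : D - h^-1 *: (P (h + x) - P x) = - h^-1 * (P (h + x) - P x - h * D).
    have sc : forall a b : R, a *: b = a * b by []. rewrite sc; field; exact: h0.
  rewrite normrM normrN normrV ?unitfE //.
  have hp : 0 < `|h| by rewrite normr_gt0.
  rewrite ler_pdivrMl //.
  apply: le_trans (est h) _.
  rewrite -(real_normK (num_real h)).
  have : `|h| * (2 * K2 + 1) <= e by rewrite -ler_pdivlMr //; exact: ltW.
  nra.
apply: DeriveDef; first by apply/cvg_ex; exists D.
exact: cvg_lim.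
Unshelve. all: by end_near.
Qed.

Lemma P_bound (G : R -> R) (s a KG : R) : continuous G ->
  (forall z, `|G z| <= KG) ->
  `|\int[mu]_(u in setT) (G (a + u / s) - G a)| <= KG + KG.
Proof.
move=> cG hG; apply: int_bound.
  apply: cb_int; first by apply: contB; [exact: cont_shift | exact: cst_continuous].
  exists (KG + KG) => u; apply: le_trans (ler_normB _ _) _; exact: lerD.
by move=> u; apply: le_trans (ler_normB _ _) _; exact: lerD.
Qed.

End I.

Lemma supnorm_ge (h : R -> R) : bounded_fun_R h -> forall x, `|h x| <= supnorm h.
Proof.
move=> [K hK] x; apply: ub_le_sup; last by exists x.
by exists K => _ [y _ <-]; exact: hK.
Qed.

Lemma supnorm_ge0 (h : R -> R) : bounded_fun_R h -> 0 <= supnorm h.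
Proof. by move=> b; exact: (le_trans (normr_ge0 (h 0)) (@supnorm_ge h b 0)). Qed.

End H.
Theorem lemma5p1 (R : realType) (alpha : R) (N : nat) (f : R -> R)
  (mu : probability R R) :
  0 < alpha -> (1 <= N)%N ->
  (forall x, 0 < f x) ->
  lipschitz_R (fun x => Num.sqrt (f x)) ->
  Ck 4 f ->
  (forall k, (1 <= k <= 4)%N -> bounded_fun_R (dern k (fun x => Num.sqrt (f x)))) ->
  mu.-integrable [set: R] (fun u => (u : R)%:E) ->
  (\int[mu]_(u in [set: R]) (u : R) = 0) ->
  (\int[mu]_(u in [set: R]) (`|u| ^+ 4 : R)%:E < +oo)%E ->
  exists C : R, 0 < C /\
    forall g : R -> R, C2b g ->
    forall M : R, 0 < M ->
    forall x : R, -M <= x <= M ->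
      derivable (AN alpha N f mu g) x 1 /\
      `|dern 1 (AN alpha N f mu g) x| <= C * norm2inf g * (1 + M ^+ 2).
Proof.
move=> a0 N1 fpos [L hL] [df _] hsq _ _ _.
have [B1 hB1] := hsq 1%N isT.
pose sf := fun x => Num.sqrt (f x).
have dfz (z : R) : derivable f z 1 := df 0%N z isT.
have isd (h : R -> R) (z : R) : derivable h z 1 -> is_derive z 1 h (derive1 h z).
  by move=> dh; rewrite derive1E; exact: derivableP.
pose a := sf 0.
have a_ge0 : 0 <= a by exact: sqrtr_ge0.
pose Q := a + `|L| + `|B1| + 1.
have Q1 : 1 <= Q by rewrite /Q; have := normr_ge0 L; have := normr_ge0 B1; lra.
have Nge0 : 0 <= (N%:R : R) by exact: ler0n.
exists (2 * alpha + 12 * N%:R * Q ^+ 2 + 1); split.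
  have : 0 <= Q ^+ 2 by exact: sqr_ge0.
  nra.
move=> g [[dg _] hb] M M0 x /andP[xl xr].
have dg0 (z : R) : derivable g z 1 := dg 0%N z isT.
have dg1 (z : R) : derivable (derive1 g) z 1 := dg 1%N z isT.
have b0 := hb 0%N isT; have b1 := hb 1%N isT; have b2 := hb 2%N isT.
have hS0 := @supnorm_ge R _ b0.
have hS1 := @supnorm_ge R _ b1.
have hS2 := @supnorm_ge R _ b2.
pose s := Num.sqrt (N%:R : R).
pose P := fun y => \int[mu]_(u in setT) (g (y + u / s) - g y).
pose P' := \int[mu]_(u in setT) (derive1 g (x + u / s) - derive1 g x).
have dP : is_derive x 1 P P' := @param_deriv R mu g s x _ _ _ dg0 dg1 hS0 hS1 hS2.
have dG1 : is_derive x 1 (derive1 g) (derive1 (derive1 g) x) := isd _ _ (dg1 x).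
have dF : is_derive x 1 f (derive1 f x) := isd _ _ (dfz x).
have EAN : AN alpha N f mu g = (-alpha) \*: (id * derive1 g) + N%:R \*: (f * P).
  apply/funext => y; rewrite /AN /=.
  have sc (k : R) (F : R -> R) (z : R) : (k \*: F) z = k * F z by [].
  rewrite !fctE !sc.
  rewrite /P /s; ring.
have dA : is_derive x 1 (AN alpha N f mu g) ((-alpha) * (x * derive1 (derive1 g) x + derive1 g x) + N%:R * (f x * P' + P x * derive1 f x)).
  rewrite EAN; apply: is_derive_eq.
  have sc2 (u v : R) : u *: v = u * v by [].
  by rewrite !sc2 mulr1.
split; first exact: (@ex_derive _ _ _ _ _ _ _ dA).
have -> : dern 1 (AN alpha N f mu g) x = (-alpha) * (x * derive1 (derive1 g) x + derive1 g x) + N%:R * (f x * P' + P x * derive1 f x).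
  by rewrite /dern /= derive1E derive_val.
have cg : continuous g by move=> z; apply: der_cont.
have cg' : continuous (derive1 g) by move=> z; apply: der_cont.
have hP : `|P x| <= supnorm (dern 0 g) + supnorm (dern 0 g).
  exact: (@P_bound R mu g s x _ cg hS0).
have hP' : `|P'| <= supnorm (dern 1 g) + supnorm (dern 1 g).
  exact: (@P_bound R mu (derive1 g) s x _ cg' hS1).
have dsf : derivable sf x 1.
  exact: (@ex_derive _ _ _ _ _ _ _ (@is_derive1_comp R Num.sqrt f x _ _ (is_derive1_sqrt (fpos x)) dF)).
have hd := isd sf x dsf.
have Ef : f = sf * sf.
  apply/funext => y; rewrite fctE /sf -expr2 sqr_sqrtr //; exact: ltW.
have Ed : derive1 f x = sf x * derive1 sf x + sf x * derive1 sf x.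
  have H := is_deriveM hd hd.
  by rewrite derive1E {1}Ef derive_val.
have hd' : `|derive1 sf x| <= `|B1| := le_trans (hB1 x) (ler_norm B1).
have sfx0 : 0 <= sf x by exact: sqrtr_ge0.
have xM : `|x| <= M by rewrite ler_norml xl xr.
have sfxb : sf x <= a + `|L| * M.
  have := hL x 0; rewrite subr0 => h.
  have h2 : sf x - a <= `|L| * M.
    apply: le_trans (ler_norm _) _; apply: le_trans h _.
    apply: le_trans (ler_norm _) _; rewrite normrM normr_id.
    exact: ler_wpM2l.
  lra.
have Efx : f x = sf x ^+ 2 by rewrite /sf sqr_sqrtr //; exact: ltW.
rewrite Ed Efx.
have n_eq : norm2inf g = supnorm (dern 0 g) + supnorm (dern 1 g) + supnorm (dern 2 g) by [].
rewrite n_eq.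
have s0 := @supnorm_ge0 R _ b0; have s1 := @supnorm_ge0 R _ b1; have s2 := @supnorm_ge0 R _ b2.
move: s0 s1 s2 hP hP' (hS1 x) (hS2 x) hd' sfx0 sfxb xM.
rewrite /dern /=.
set S0 := supnorm _; set S1 := supnorm _; set S2 := supnorm _.
set g1 := derive1 g x; set g2 := derive1 (derive1 g) x; set d := derive1 sf x.
set t := sf x; set Px := P x.
move=> s0 s1 s2 hP hP' h1 h2 hd' t0 tb xM.
set n := S0 + S1 + S2.
have n0 : 0 <= n by rewrite /n; lra.
have A : `|x * g2 + g1| <= (M + 1) * n.
  apply: le_trans (ler_normD _ _) _; rewrite normrM.
  have : `|x| * `|g2| <= M * S2 by apply: ler_pM.
  rewrite /n; nra.
have fd : `|t * d + t * d| <= 2 * t * `|B1|.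
  apply: le_trans (ler_normD _ _) _; rewrite normrM ger0_norm //.
  have : t * `|d| <= t * `|B1| by apply: ler_wpM2l.
  lra.
have B : `|t ^+ 2 * P' + Px * (t * d + t * d)| <= (2 * t ^+ 2 + 4 * t * `|B1|) * n.
  apply: le_trans (ler_normD _ _) _; rewrite !normrM.
  rewrite ger0_norm ?sqr_ge0 //.
  have e1 : t ^+ 2 * `|P'| <= t ^+ 2 * (2 * n).
    apply: ler_wpM2l; first exact: sqr_ge0.
    rewrite /n; lra.
  have e2 : `|Px| * `|t * d + t * d| <= (2 * n) * (2 * t * `|B1|).
    apply: ler_pM => //; rewrite /n; lra.
  lra.
have Lp := normr_ge0 L; have Bp := normr_ge0 B1.
have tQ : t <= Q * (1 + M) by rewrite /Q; nra.
have BQ : `|B1| <= Q by rewrite /Q; lra.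
have C1 : 2 * t ^+ 2 + 4 * t * `|B1| <= 12 * Q ^+ 2 * (1 + M ^+ 2).
  have : t * t <= (Q * (1 + M)) * (Q * (1 + M)) by apply: ler_pM.
  have : t * `|B1| <= Q * (1 + M) * Q by apply: ler_pM.
  nra.
have C2 : M + 1 <= 2 * (1 + M ^+ 2) by nra.
apply: le_trans (ler_normD _ _) _.
rewrite !normrM normrN (gtr0_norm a0) (ger0_norm Nge0).
have : alpha * `|x * g2 + g1| <= alpha * ((M + 1) * n) by apply: ler_wpM2l => //; exact: ltW.
have : N%:R * `|t ^+ 2 * P' + Px * (t * d + t * d)| <= N%:R * ((2 * t ^+ 2 + 4 * t * `|B1|) * n) by apply: ler_wpM2l.
have : (M + 1) * n <= 2 * (1 + M ^+ 2) * n by apply: ler_wpM2r.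
have : (2 * t ^+ 2 + 4 * t * `|B1|) * n <= 12 * Q ^+ 2 * (1 + M ^+ 2) * n by apply: ler_wpM2r.
have : 0 <= (1 + M ^+ 2) * n by apply: mulr_ge0 => //; nra.
have : 0 <= Q ^+ 2 by exact: sqr_ge0.
nra.
Qed.
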